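(* Consider the stochastic discrete-time system $x_{k+1}=f(x_k,u_k,w_k)$, $k=0,\dots,N-1$, as described in the context, with a non-random initial state $x_0=x\in\mathcal{X}$, and let $g:\mathcal{X}\to\mathbb{R}$ be any function. For every initial state $x\in\mathcal{X}$ and every confidence level $\alpha\in(0,1]$ there exists a policy $\pi^*\in\Pi$ such that $$\mathrm{CVaR}_\alpha\big[Z^{\pi^*}_x\big]=\inf_{\pi\in\Pi}\mathrm{CVaR}_\alpha\big[Z^{\pi}_x\big]=\min_{\pi\in\Pi}\mathrm{CVaR}_\alpha\big[Z^{\pi}_x\big],$$ where $Z^\pi_x:=\max_{k=0,\dots,N} g(x_k)$ for the state trajectory $(x_0,\dots,x_N)$ generated from $x_0=x$ under $\pi$.
   Context: System: $x_{k+1}=f(x_k,u_k,w_k)$ for $k=0,\dots,N-1$, where $x_k\in\mathcal{X}\subseteq\mathbb{R}^n$, the control space $U$ and the disturbance space $D=\{d_1,\dots,d_W\}$ are finite sets of real vectors, and $f:\mathcal{X}\times U\times D\to\mathcal{X}$ is bounded and Lipschitz continuous. The disturbances $w_0,\dots,w_{N-1}$ are independent of each other and of the states and controls, with $\mathbb{P}[w_k=d_j]=p_j$, $p_j\ge 0$, $\sum_j p_j=1$; they are the only source of randomness (the initial state is deterministic). The policy set is $\Pi:=\{(\mu_0,\dots,\mu_{N-1})\mid \mu_k:H_k\to U\}$, where $H_k=\mathcal{X}^{k+1}$ is the set of state histories $(x_0,\dots,x_k)$, and $u_k=\mu_k(x_0,\dots,x_k)$. For a random variable $Z$ with finite expectation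 and $\alpha\in(0,1]$, $\mathrm{CVaR}_\alpha[Z]:=\min_{t\in\mathbb{R}}\{t+\frac{1}{\alpha}\mathbb{E}[\max\{Z-t,0\}]\}$. *)

(* Defs.v *)
From HB Require Import structures.
From mathcomp Require Import all_boot all_order all_algebra.
From mathcomp Require Import all_classical all_reals all_analysis.
Set Implicit Arguments. Unset Strict Implicit. Unset Printing Implicit Defensive.
Import Order.TTheory GRing.Theory Num.Theory.
Import numFieldNormedType.Exports.
Local Open Scope classical_set_scope.
Local Open Scope ring_scope.

Section Sys.
Variables (R : realType) (n m q W N : nat).
Variable f : 'rV[R]_n -> 'rV[R]_m -> 'rV[R]_q -> 'rV[R]_n.
(* disturbance values d_1..d_W and probabilities p_1..p_W *)
Variables (d : 'I_W -> 'rV[R]_q) (p : 'I_W -> R).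

(* A history-dependent policy: pol k maps (x_0,...,x_k) to u_k. *)
Definition policy := forall k : nat, ('I_k.+1 -> 'rV[R]_n) -> 'rV[R]_m.

Definition admissible (U : seq 'rV[R]_m) (pol : policy) :=
  forall k (h : 'I_k.+1 -> 'rV[R]_n), (k < N)%N -> pol k h \in U.

Definition wval (ws : {ffun 'I_N -> 'I_W}) (k : nat) : 'rV[R]_q :=
  if insub k is Some i then d (ws i) else 0.

Fixpoint traj (pol : policy) (x : 'rV[R]_n) (ws : {ffun 'I_N -> 'I_W}) (k : nat)
  : seq 'rV[R]_n :=
  match k with
  | 0 => [:: x]
  | k'.+1 => let s := traj pol x ws k' in
      rcons s (f (last x s) (pol k' (fun i : 'I_k'.+1 => nth x s i)) (wval ws k'))
  end.

Definition Zcost (g : 'rV[R]_n -> R) (pol : policy) (x : 'rV[R]_n)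
  (ws : {ffun 'I_N -> 'I_W}) : R :=
  \big[Num.max/g x]_(k < N.+1) g (nth x (traj pol x ws N) k).

Definition prob (ws : {ffun 'I_N -> 'I_W}) : R := \prod_(k < N) p (ws k).

Definition Expect (Z : {ffun 'I_N -> 'I_W} -> R) : R :=
  \sum_(ws : {ffun 'I_N -> 'I_W}) prob ws * Z ws.

Definition CVaR (alpha : R) (Z : {ffun 'I_N -> 'I_W} -> R) : R :=
  inf [set t + alpha^-1 * Expect (fun ws => Num.max (Z ws - t) 0) | t in [set: R]].

End Sys.

Arguments CVaR {R W} N p alpha Z.
Arguments Zcost {R n m q W} N f d g pol x ws.
Arguments admissible {R n m} N U pol.

(* Main.v *)
Require Import Defs.
From HB Require Import structures.
From mathcomp Require Import all_boot all_order all_algebra.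
From mathcomp Require Import all_classical all_reals all_analysis.
Import Order.TTheory GRing.Theory Num.Theory.
Import numFieldNormedType.Exports.
Local Open Scope classical_set_scope.
Local Open Scope ring_scope.

Section Helpers.
Variables (R : realType) (n m q W N : nat).
Variable f : 'rV[R]_n -> 'rV[R]_m -> 'rV[R]_q -> 'rV[R]_n.
Variables (d : 'I_W -> 'rV[R]_q) (U : seq 'rV[R]_m) (x : 'rV[R]_n).

Definition keyT := {ffun {ffun 'I_N -> 'I_W} -> {ffun 'I_N -> 'I_(size U).+1}}.

Definition key (pol : policy R n m) : keyT :=
  [ffun ws => [ffun k : 'I_N =>
     inord (index (pol k (fun i : 'I_k.+1 => nth x (traj f d pol x ws k) i)) U)]].

Lemma traj_key (pol1 pol2 : policy R n m) (ws : {ffun 'I_N -> 'I_W}) :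
  admissible N U pol1 -> admissible N U pol2 -> key pol1 = key pol2 ->
  forall k, (k <= N)%N -> traj f d pol1 x ws k = traj f d pol2 x ws k.
Proof.
move=> a1 a2 hk; elim=> [|k IH] hkN //=.
have hkN' : (k < N)%N by exact: hkN.
have hk' : (k <= N)%N by exact: ltnW.
rewrite (IH hk').
have -> : pol1 k (fun i : 'I_k.+1 => nth x (traj f d pol2 x ws k) i) =
          pol2 k (fun i : 'I_k.+1 => nth x (traj f d pol2 x ws k) i); last by [].
have := congr1 (fun t : keyT => nat_of_ord (t ws (Ordinal hkN'))) hk.
rewrite !ffunE /= (IH hk').
have s1 := index_size (pol1 k (fun i : 'I_k.+1 => nth x (traj f d pol2 x ws k) i)) U.
have s2 := index_size (pol2 k (fun i : 'I_k.+1 => nth x (traj f d pol2 x ws k) i)) U.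
rewrite (inordK s1) (inordK s2) => hi.
set h := (fun i : 'I_k.+1 => _).
have u1 := a1 k h hkN'; have u2 := a2 k h hkN'.
by rewrite -(nth_index (pol1 k h) u1) hi nth_index.
Qed.

End Helpers.
Arguments key {R n m q W} N f d U x pol.
Arguments keyT {R m} W N U.
Arguments traj_key {R n m q W N f d U x pol1 pol2 ws}.

Theorem lemma1 (R : realType) (n m q W N : nat)
  (X : set 'rV[R]_n) (U : seq 'rV[R]_m)
  (f : 'rV[R]_n -> 'rV[R]_m -> 'rV[R]_q -> 'rV[R]_n)
  (d : 'I_W -> 'rV[R]_q) (p : 'I_W -> R)
  (g : 'rV[R]_n -> R)
  (hU : U != [::])
  (hfX : forall x u w, X x -> u \in U -> w \in codom d -> X (f x u w))
  (hfbd : exists M : R, forall x u w, X x -> u \in U -> w \in codom d ->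
            `|f x u w| <= M)
  (hflip : exists L : R, forall x y u w, X x -> X y -> u \in U -> w \in codom d ->
            `|f x u w - f y u w| <= L * `|x - y|)
  (hp0 : forall j, 0 <= p j) (hp1 : \sum_(j < W) p j = 1)
  (x : 'rV[R]_n) (hx : X x) (alpha : R) (ha0 : 0 < alpha) (ha1 : alpha <= 1) :
  exists pol : policy R n m,
    admissible N U pol /\
    CVaR N p alpha (Zcost N f d g pol x) =
      inf [set CVaR N p alpha (Zcost N f d g pi x) | pi in admissible N U] /\
    (forall pi : policy R n m, admissible N U pi ->
       CVaR N p alpha (Zcost N f d g pol x) <= CVaR N p alpha (Zcost N f d g pi x)).
Proof.
set C := fun pp => CVaR N p alpha (Zcost N f d g pp x).
have CK : forall pi1 pi2, admissible N U pi1 -> admissible N U pi2 ->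
    key N f d U x pi1 = key N f d U x pi2 -> C pi1 = C pi2.
  move=> pi1 pi2 a1 a2 hk; rewrite /C.
  have -> : Zcost N f d g pi1 x = Zcost N f d g pi2 x; last by [].
  apply/funext => ws; rewrite /Zcost (traj_key a1 a2 hk N (leqnn N)); by [].
case: U hU hfX hfbd hflip CK => [|u0 U'] hU0 _ _ _ CK; first by case/eqP: hU0.
pose pol0 : policy R n m := fun _ _ => u0.
have a0 : admissible N (u0 :: U') pol0 by move=> k h _; rewrite inE eqxx.
pose P : pred (keyT W N (u0 :: U')) :=
  fun t => `[< exists pp, admissible N (u0 :: U') pp /\ key N f d (u0 :: U') x pp = t >].
have P0 : P (key N f d (u0 :: U') x pol0) by apply/asboolP; exists pol0.
pose pk t : policy R n m := match pselect (exists pp, admissible N (u0 :: U') pp /\ key N f d (u0 :: U') x pp = t) with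
   | left e => projT1 (cid e) | right _ => pol0 end.
have pkP : forall t, P t -> admissible N (u0 :: U') (pk t) /\ key N f d (u0 :: U') x (pk t) = t.
  move=> t /asboolP Pt; rewrite /pk; case: pselect => e; last by case: (e Pt).
  by case: (cid e).
pose V t := C (pk t).
case: (arg_minP V P0) => t Pt Hmin.
have [at_ kt] := pkP t Pt.
have lb : forall pp, admissible N (u0 :: U') pp -> C (pk t) <= C pp.
  move=> pp app.
  have Ppi : P (key N f d (u0 :: U') x pp) by apply/asboolP; exists pp.
  have := Hmin _ Ppi; rewrite /V.
  have [a2 k2] := pkP _ Ppi.
  by rewrite (CK _ _ a2 app k2).
have E : C (pk t) = inf [set C pp | pp in admissible N (u0 :: U')].
  apply/le_anti/andP; split.
    apply: lb_le_inf; first by exists (C pol0), pol0.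
    by move=> _ [pp app <-]; exact: lb.
  have : lbound [set C pp | pp in admissible N (u0 :: U')]
            (inf [set C pp | pp in admissible N (u0 :: U')]).
    by apply: ge_inf; exists (C (pk t)) => _ [pp app <-]; exact: lb.
  by apply; exists (pk t).
exists (pk t); split; first exact: at_.
split; first exact: E.
exact: lb.
Qed.
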